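(* Let $\nu,a,b\in\mathbb{R}$ with $a+\nu>b+\nu>0$. Let $f:(b,a)\to\mathbb{R}$ be a smooth decreasing function, and suppose there is $\hat u\in(b,a)$ with $f(\hat u)=f'(\hat u)=f''(\hat u)=0$, and that $f'''(u)<0$ for all $b<u<a$. Define $q$ on $(b,a)^3$ by $$q(u_1,u_2,u_3)=\frac{1}{2\sqrt2\,\pi}\int_{-1}^1\int_{-1}^1\frac{f\big(\tfrac{1+\mu}{2}\tfrac{1+\tau}{2}u_1+\tfrac{1+\mu}{2}\tfrac{1-\tau}{2}u_2+\tfrac{1-\mu}{2}u_3\big)}{\sqrt{(1-\mu)(1-\tau^2)}}\,d\mu\,d\tau.$$ Then $$\frac{\partial^3 q}{\partial u_i\partial u_j\partial u_k}<0\quad\text{for all }i,j,k\in\{1,2,3\}.$$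
   Context: Here $f$ is the inverse function of a decreasing initial profile $u_0(x)$ with $u_0(-\infty)=a$ and $u_0(+\infty)=b$. *)

(* Defs.v *)
From Stdlib Require Import Reals.
From Coquelicot Require Import Coquelicot.
Open Scope R_scope.

Definition coord (u : R * R * R) (i : nat) : R :=
  match i with
  | O => fst (fst u)
  | S O => snd (fst u)
  | _ => snd u
  end.

Definition upd (u : R * R * R) (i : nat) (t : R) : R * R * R :=
  match i with
  | O => (t, snd (fst u), snd u)
  | S O => (fst (fst u), t, snd u)
  | _ => (fst (fst u), snd (fst u), t)
  end.

Definition pderiv (F : R * R * R -> R) (i : nat) (u : R * R * R) : R :=
  Derive (fun t => F (upd u i t)) (coord u i).
Definition ex_pderiv (F : R * R * R -> R) (i : nat) (u : R * R * R) : Prop :=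
  ex_derive (fun t => F (upd u i t)) (coord u i).
Definition is_pderiv (F : R * R * R -> R) (i : nat) (u : R * R * R) (l : R) : Prop :=
  is_derive (fun t => F (upd u i t)) (coord u i) l.

Definition q (f : R -> R) (u : R * R * R) : R :=
  / (2 * sqrt 2 * PI) *
  RInt_gen (fun tau : R =>
    RInt_gen (fun mu : R =>
      f ((1 + mu) / 2 * ((1 + tau) / 2) * coord u 0
         + (1 + mu) / 2 * ((1 - tau) / 2) * coord u 1
         + (1 - mu) / 2 * coord u 2)
      / sqrt ((1 - mu) * (1 - tau ^ 2)))
      (at_right (-1)) (at_left 1))
    (at_right (-1)) (at_left 1).

Definition in_box (b a : R) (u : R * R * R) : Prop :=
  b < coord u 0 < a /\ b < coord u 1 < a /\ b < coord u 2 < a.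

(* Main.v *)
Require Import Defs.
From Stdlib Require Import Reals Lra Psatz ClassicalEpsilon Classical.
From Coquelicot Require Import Coquelicot.
Open Scope R_scope.

Lemma ballR (x e y : R) : ball x e y <-> Rabs (y - x) < e.
Proof. split; intro H; exact H. Qed.

Lemma param_cont (G : R -> R -> R -> R) (c d x0 y0 : R) :
  c <= d ->
  (forall s, c <= s <= d ->
     continuous (fun p : R * R * R => G (fst (fst p)) (snd (fst p)) (snd p)) ((x0, y0), s)) ->
  locally_2d (fun x y => ex_RInt (G x y) c d) x0 y0 ->
  continuity_2d_pt (fun x y => RInt (G x y) c d) x0 y0.
Proof.
  intros Hcd Hc [d1 Hex] eps.
  set (e := eps / (2 * (d - c + 1))).
  assert (He : 0 < e). { unfold e. apply Rdiv_lt_0_compat. apply cond_pos. lra. }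
  assert (Hd : forall s, exists dl : posreal, c <= s <= d -> forall p : R*R*R,
     ball ((x0,y0),s) dl p -> Rabs (G (fst (fst p)) (snd (fst p)) (snd p) - G x0 y0 s) < e).
  { intro s. destruct (classic (c <= s <= d)) as [Hs|Hs].
    - specialize (Hc s Hs).
      assert (H2 := proj1 (filterlim_locally _ _) Hc (mkposreal e He)).
      destruct H2 as [dl Hdl]. exists dl. intros _ p Hp. apply Hdl in Hp. exact Hp.
    - exists (mkposreal 1 Rlt_0_1). intros H; contradiction. }
  set (delta := fun s => proj1_sig (constructive_indefinite_description _ (Hd s))).
  assert (Hdelta : forall s, c <= s <= d -> forall p : R*R*R,
     ball ((x0,y0),s) (delta s) p -> Rabs (G (fst (fst p)) (snd (fst p)) (snd p) - G x0 y0 s) < e).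
  { intro s. exact (proj2_sig (constructive_indefinite_description _ (Hd s))). }
  destruct (compactness_value_1d c d delta) as [om Hom].
  assert (Hm : 0 < Rmin om d1) by (apply Rmin_pos; apply cond_pos).
  exists (mkposreal _ Hm). intros u v Hu Hv. simpl in Hu, Hv.
  assert (Hu1 : Rabs (u - x0) < om) by (eapply Rlt_le_trans; [exact Hu| apply Rmin_l]).
  assert (Hv1 : Rabs (v - y0) < om) by (eapply Rlt_le_trans; [exact Hv| apply Rmin_l]).
  assert (Hu2 : Rabs (u - x0) < d1) by (eapply Rlt_le_trans; [exact Hu| apply Rmin_r]).
  assert (Hv2 : Rabs (v - y0) < d1) by (eapply Rlt_le_trans; [exact Hv| apply Rmin_r]).
  assert (Hb : forall s, c <= s <= d -> Rabs (G u v s - G x0 y0 s) <= 2 * e).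
  { intros s Hs.
    destruct (Rle_lt_dec (Rabs (G u v s - G x0 y0 s)) (2 * e)) as [ok|bad]; [exact ok|exfalso].
    apply (Hom s Hs). intros [t [Ht [Hst Homt]]].
    assert (A1 := Hdelta t Ht ((u,v),s)).
    assert (A2 := Hdelta t Ht ((x0,y0),s)).
    simpl in A1, A2.
    assert (B1 : Rabs (G u v s - G x0 y0 t) < e).
    { apply A1. split; [split|]; apply ballR.
      all: try (eapply Rlt_le_trans; [exact Hu1|exact Homt]).
      all: try (eapply Rlt_le_trans; [exact Hv1|exact Homt]).
      all: exact Hst. }
    assert (B2 : Rabs (G x0 y0 s - G x0 y0 t) < e).
    { apply A2. split; [split|]; apply ballR.
      all: try (rewrite Rminus_diag, Rabs_R0; apply cond_pos).
      all: exact Hst. }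
    assert (Rabs (G u v s - G x0 y0 s) <= Rabs (G u v s - G x0 y0 t) + Rabs (G x0 y0 s - G x0 y0 t)).
    { replace (G u v s - G x0 y0 s) with ((G u v s - G x0 y0 t) + - (G x0 y0 s - G x0 y0 t)) by ring.
      eapply Rle_trans; [apply Rabs_triang|]. rewrite Rabs_Ropp. lra. }
    lra. }
  assert (E1 := Hex u v Hu2 Hv2).
  assert (E0 : ex_RInt (G x0 y0) c d). { apply Hex; rewrite Rminus_diag, Rabs_R0; apply cond_pos. }
  assert (Heq : RInt (G u v) c d - RInt (G x0 y0) c d = RInt (fun s => minus (G u v s) (G x0 y0 s)) c d).
  { rewrite (RInt_minus (G u v) (G x0 y0)) by assumption. reflexivity. }
  cbv beta. rewrite Heq.
  assert (Hn : Rabs (RInt (fun s : R => minus (G u v s) (G x0 y0 s)) c d) <= (d - c) * (2 * e)).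
  { refine (abs_RInt_le_const _ c d (2 * e) Hcd _ _).
    - exact (ex_RInt_minus _ _ _ _ E1 E0).
    - intros t Ht. unfold minus, plus, opp; simpl. exact (Hb t Ht). }
  eapply Rle_lt_trans; [exact Hn|].
  unfold e. apply Rminus_gt_0_lt.
  replace (eps - (d - c) * (2 * (eps / (2 * (d - c + 1))))) with (eps / (d - c + 1)) by (field; lra).
  apply Rdiv_lt_0_compat; [apply cond_pos|lra].
Qed.
Lemma cR_plus {U : UniformSpace} (f g : U -> R) x :
  continuous f x -> continuous g x -> continuous (fun y => f y + g y) x.
Proof. intros H1 H2. exact (continuous_plus f g x H1 H2). Qed.
Lemma cR_mult {U : UniformSpace} (f g : U -> R) x :
  continuous f x -> continuous g x -> continuous (fun y => f y * g y) x.
Proof. intros H1 H2. exact (continuous_mult f g x H1 H2). Qed.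
Lemma cR_minus {U : UniformSpace} (f g : U -> R) x :
  continuous f x -> continuous g x -> continuous (fun y => f y - g y) x.
Proof. intros H1 H2. exact (continuous_minus f g x H1 H2). Qed.
Lemma cR_const {U : UniformSpace} (c : R) (x : U) : continuous (fun _ => c) x.
Proof. exact (continuous_const c x). Qed.
Lemma cR_comp {U : UniformSpace} (f : U -> R) (h : R -> R) x :
  continuous f x -> continuous h (f x) -> continuous (fun y => h (f y)) x.
Proof. intros H1 H2. exact (continuous_comp f h x H1 H2). Qed.
Lemma c3_1 (p : R*R*R) : continuous (fun q : R*R*R => fst (fst q)) p.
Proof. destruct p as [[x y] z]. apply (continuous_comp fst fst ((x,y),z)).
  apply continuous_fst. apply continuous_fst. Qed.
Lemma c3_2 (p : R*R*R) : continuous (fun q : R*R*R => snd (fst q)) p.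
Proof. destruct p as [[x y] z]. apply (continuous_comp fst snd ((x,y),z)).
  apply continuous_fst. apply continuous_snd. Qed.
Lemma c3_3 (p : R*R*R) : continuous (fun q : R*R*R => snd q) p.
Proof. destruct p as [[x y] z]. apply continuous_snd. Qed.
Lemma c2_1 (p : R*R) : continuous (fun q : R*R => fst q) p.
Proof. destruct p as [x y]. apply continuous_fst. Qed.
Lemma c2_2 (p : R*R) : continuous (fun q : R*R => snd q) p.
Proof. destruct p as [x y]. apply continuous_snd. Qed.

Definition alpha (s : R) : R := (s^2/2 + 1 - Rabs (s^2/2 - 1)) / 2.
Definition wc (i : nat) (th s : R) : R :=
  match i with
  | O => (1 - alpha s) * ((1 + sin th) / 2)
  | S O => (1 - alpha s) * ((1 - sin th) / 2)
  | _ => alpha s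
  end.
Definition Lf (v : R*R*R) (th s : R) : R :=
  coord v 0 * wc 0 th s + coord v 1 * wc 1 th s + coord v 2 * wc 2 th s.
Definition Iint (k : R -> R) (W : R -> R -> R) (v : R*R*R) : R :=
  RInt (fun th => RInt (fun s => k (Lf v th s) * W th s) 0 (sqrt 2)) (-(PI/2)) (PI/2).
Definition Wok (W : R -> R -> R) := forall p : R*R, continuous (fun z : R*R => W (fst z) (snd z)) p.

Lemma alpha_cont x : continuous alpha x.
Proof.
  unfold alpha.
  assert (Hs : forall y, continuous (fun s : R => s ^ 2 / 2) y).
  { intro y. apply (ex_derive_continuous (K:=R_AbsRing) (V:=R_NormedModule)). auto_derive. auto. }
  apply (cR_mult (fun s => s ^ 2 / 2 + 1 - Rabs (s ^ 2 / 2 - 1)) (fun _ => / 2)); [|apply cR_const].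
  apply cR_minus. apply cR_plus. apply Hs. apply cR_const.
  apply continuous_Rabs_comp. apply cR_minus. apply Hs. apply cR_const.
Qed.

Lemma alpha_bnd s : 0 <= alpha s <= 1.
Proof.
  unfold alpha. assert (0 <= s^2) by (apply pow2_ge_0).
  destruct (Rle_dec (s^2/2) 1).
  - rewrite Rabs_left1 by lra. lra.
  - rewrite Rabs_pos_eq by lra. lra.
Qed.

Lemma alpha_eq s : 0 <= s <= sqrt 2 -> alpha s = s^2/2.
Proof.
  intros [H1 H2]. unfold alpha.
  assert (s^2 <= 2).
  { assert (E : sqrt 2 ^ 2 = 2) by (rewrite pow2_sqrt; lra). nra. }
  rewrite Rabs_left1 by lra. lra.
Qed.

Lemma sin_bnd th : -1 <= sin th <= 1.
Proof. destruct (SIN_bound th); lra. Qed.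

Lemma wc_nonneg i th s : 0 <= wc i th s.
Proof.
  destruct (alpha_bnd s). destruct (sin_bnd th).
  destruct i as [|[|i]]; simpl; try lra; apply Rmult_le_pos; lra.
Qed.

Lemma wc_sum th s : wc 0 th s + wc 1 th s + wc 2 th s = 1.
Proof. simpl. field. Qed.

Lemma Lf_box b a v th s : in_box b a v -> b < Lf v th s < a.
Proof.
  intros [[H1 H2] [[H3 H4] [H5 H6]]]. unfold Lf.
  assert (W0 := wc_nonneg 0 th s). assert (W1 := wc_nonneg 1 th s).
  assert (W2 := wc_nonneg 2 th s). assert (S := wc_sum th s).
  set (w0 := wc 0 th s) in *. set (w1 := wc 1 th s) in *. set (w2 := wc 2 th s) in *.
  set (x := coord v 0) in *. set (y := coord v 1) in *. set (z := coord v 2) in *.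
  set (m := Rmin (x - b) (Rmin (y - b) (z - b))).
  set (M := Rmin (a - x) (Rmin (a - y) (a - z))).
  assert (m <= x - b /\ m <= y - b /\ m <= z - b /\ 0 < m) as [m1 [m2 [m3 m4]]].
  { unfold m. repeat split; try apply Rmin_l;
    try (eapply Rle_trans; [apply Rmin_r|]); try apply Rmin_l; try apply Rmin_r;
    repeat apply Rmin_pos; lra. }
  assert (M <= a - x /\ M <= a - y /\ M <= a - z /\ 0 < M) as [M1 [M2 [M3 M4]]].
  { unfold M. repeat split; try apply Rmin_l;
    try (eapply Rle_trans; [apply Rmin_r|]); try apply Rmin_l; try apply Rmin_r;
    repeat apply Rmin_pos; lra. }
  assert ((x - b) * w0 >= m * w0) by nra.
  assert ((y - b) * w1 >= m * w1) by nra.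
  assert ((z - b) * w2 >= m * w2) by nra.
  assert ((a - x) * w0 >= M * w0) by nra.
  assert ((a - y) * w1 >= M * w1) by nra.
  assert ((a - z) * w2 >= M * w2) by nra.
  split; nra.
Qed.

Lemma coord_upd v i t : coord (upd v i t) i = t.
Proof. destruct v as [[x y] z]; destruct i as [|[|i]]; reflexivity. Qed.

Lemma Lf_upd v i t th s :
  Lf (upd v i t) th s = Lf v th s + (t - coord v i) * wc i th s.
Proof.
  destruct v as [[x y] z]; destruct i as [|[|i]]; unfold Lf; simpl; ring.
Qed.

Lemma box_upd b a v i t : in_box b a v -> b < t < a -> in_box b a (upd v i t).
Proof.
  destruct v as [[x y] z]; intros [H1 [H2 H3]] Ht;
  destruct i as [|[|i]]; unfold in_box; simpl in *; tauto.
Qed.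

Lemma coord_box b a v i : in_box b a v -> b < coord v i < a.
Proof.
  destruct v as [[x y] z]; intros [H1 [H2 H3]];
  destruct i as [|[|i]]; simpl in *; tauto.
Qed.

Lemma loc_int b a x : b < x < a -> locally x (fun t => b < t < a).
Proof. intros H. apply (open_and _ _ (open_gt b) (open_lt a)). exact H. Qed.

Lemma wc_cont i p : continuous (fun z : R*R => wc i (fst z) (snd z)) p.
Proof.
  assert (Ha : continuous (fun z : R*R => alpha (snd z)) p).
  { apply (cR_comp (fun z : R*R => snd z) alpha). apply c2_2. apply alpha_cont. }
  assert (Hs : continuous (fun z : R*R => sin (fst z)) p).
  { apply (cR_comp (fun z : R*R => fst z) sin). apply c2_1. apply continuous_sin. }
  destruct i as [|[|i]]; simpl.
  - apply cR_mult. apply cR_minus. apply cR_const. exact Ha.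
    apply (cR_mult (fun z : R*R => 1 + sin (fst z)) (fun _ => /2)); [|apply cR_const].
    apply cR_plus. apply cR_const. exact Hs.
  - apply cR_mult. apply cR_minus. apply cR_const. exact Ha.
    apply (cR_mult (fun z : R*R => 1 - sin (fst z)) (fun _ => /2)); [|apply cR_const].
    apply cR_minus. apply cR_const. exact Hs.
  - exact Ha.
Qed.

Lemma Wok_const c : Wok (fun _ _ => c).
Proof. intro p. apply cR_const. Qed.
Lemma Wok_mul W i : Wok W -> Wok (fun th s => W th s * wc i th s).
Proof. intros H p. apply cR_mult. apply H. apply wc_cont. Qed.

Lemma c3_W (W : R -> R -> R) p : Wok W ->
  continuous (fun q : R*R*R => W (snd (fst q)) (snd q)) p.
Proof.
  intros HW. apply (continuous_comp_2 (fun q : R*R*R => snd (fst q)) (fun q : R*R*R => snd q) W).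
  apply c3_2. apply c3_3. apply HW.
Qed.
Lemma cont_eta {U V : UniformSpace} (p : U * V) :
  continuous (fun z : U * V => (fst z, snd z)) p.
Proof.
  destruct p as [x y]. intros P [e He]. exists e. intros [z1 z2] Hz. apply He. exact Hz.
Qed.

Lemma cont3_s (G : R -> R -> R -> R) x y s :
  continuous (fun p : R*R*R => G (fst (fst p)) (snd (fst p)) (snd p)) ((x,y),s) ->
  continuous (fun s => G x y s) s.
Proof.
  intros H.
  apply (continuous_comp_2 (fun _ : R => (x,y)) (fun s : R => s) (fun a s' => G (fst a) (snd a) s') s).
  apply continuous_const. apply continuous_id. exact H.
Qed.

Lemma cont3_ts (G : R -> R -> R -> R) t th s :
  continuous (fun p : R*R*R => G (fst (fst p)) (snd (fst p)) (snd p)) ((t,th),s) ->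
  continuity_2d_pt (fun t s => G t th s) t s.
Proof.
  intros H. apply continuity_2d_pt_filterlim.
  apply (continuous_comp_2 (fun z : R*R => (fst z, th)) (fun z : R*R => snd z)
           (fun a s' => G (fst a) (snd a) s') (t,s)).
  - apply (continuous_comp_2 (fun z : R*R => fst z) (fun _ : R*R => th) (fun a b => (a,b)) (t,s)).
    apply continuous_fst. apply continuous_const. apply cont_eta.
  - apply continuous_snd.
  - exact H.
Qed.

Lemma cont2d_1d (f : R -> R -> R) x y :
  continuity_2d_pt f x y -> continuous (f x) y.
Proof.
  intros H. apply (proj2 (filterlim_locally _ _)). intros eps.
  destruct (H eps) as [d Hd]. exists d. intros y' Hy'.
  apply ballR. apply Hd. rewrite Rminus_diag, Rabs_R0. apply cond_pos. exact Hy'.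
Qed.


Definition Fk (k : R -> R) (W : R -> R -> R) (v : R*R*R) (i : nat) (t th s : R) : R :=
  k (Lf v th s + (t - coord v i) * wc i th s) * W th s.

Lemma arg_box b a v i t th s : in_box b a v -> b < t < a ->
  b < Lf v th s + (t - coord v i) * wc i th s < a.
Proof. intros Hv Ht. rewrite <- Lf_upd. apply Lf_box. apply box_upd; auto. Qed.

Lemma Fk_cont3 b a h W v i t th s : (forall x, b < x < a -> continuous h x) -> Wok W ->
  in_box b a v -> b < t < a ->
  continuous (fun p : R*R*R => Fk h W v i (fst (fst p)) (snd (fst p)) (snd p)) ((t,th),s).
Proof.
  intros Hh HW Hv Ht. unfold Fk.
  apply cR_mult; [|apply (c3_W W ((t,th),s) HW)].
  apply (cR_comp (fun p : R*R*R => Lf v (snd (fst p)) (snd p)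
     + (fst (fst p) - coord v i) * wc i (snd (fst p)) (snd p)) h).
  - apply cR_plus.
    + apply (c3_W (Lf v)). intro p. unfold Lf.
      apply cR_plus; [apply cR_plus|]; apply cR_mult; try apply cR_const; apply wc_cont.
    + apply cR_mult. apply cR_minus. apply c3_1. apply cR_const.
      apply (c3_W (wc i)). intro p; apply wc_cont.
  - apply Hh. simpl. apply arg_box; auto.
Qed.

Lemma Fk_deriv b a k k' W v i t th s : (forall x, b < x < a -> is_derive k x (k' x)) ->
  in_box b a v -> b < t < a ->
  is_derive (fun t => Fk k W v i t th s) t (Fk k' (fun th s => W th s * wc i th s) v i t th s).
Proof.
  intros Hk Hv Ht. unfold Fk. cbv beta.
  set (w := wc i th s). set (L0 := Lf v th s). set (c0 := coord v i).
  assert (Hg : is_derive (fun t => L0 + (t - c0) * w) t w).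
  { auto_derive. auto. ring. }
  assert (Hc := is_derive_comp k (fun t => L0 + (t - c0) * w) t (k' (L0 + (t - c0) * w)) w
                 (Hk _ (arg_box b a v i t th s Hv Ht)) Hg).
  assert (Hm := is_derive_scal_l (fun t => k (L0 + (t - c0) * w)) t _ (W th s) Hc).
  replace (k' (L0 + (t - c0) * w) * (W th s * w)) with (scal (scal w (k' (L0 + (t - c0) * w))) (W th s)).
  exact Hm.
  unfold scal; simpl; unfold mult; simpl. ring.
Qed.

Lemma loc2d b a x y : locally x (fun t => b < t < a) -> locally_2d (fun u v => b < u < a) x y.
Proof. intros [e He]. exists e. intros u v Hu Hv. apply He. apply ballR. exact Hu. Qed.

Lemma inner_deriv b a k k' W v i t th :
  (forall x, b < x < a -> is_derive k x (k' x)) -> (forall x, b < x < a -> continuous k' x) ->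
  Wok W -> in_box b a v -> b < t < a ->
  is_derive (fun t => RInt (fun s => Fk k W v i t th s) 0 (sqrt 2)) t
            (RInt (fun s => Fk k' (fun th s => W th s * wc i th s) v i t th s) 0 (sqrt 2)).
Proof.
  intros Hk Hk' HW Hv Ht.
  set (W' := fun th s => W th s * wc i th s).
  assert (HW' : Wok W') by (apply Wok_mul; exact HW).
  assert (HkC : forall x, b < x < a -> continuous k x).
  { intros x Hx. apply (ex_derive_continuous (K:=R_AbsRing) (V:=R_NormedModule)).
    eexists. apply Hk. exact Hx. }
  assert (Hloc := loc_int b a t Ht).
  assert (E : RInt (fun s => Fk k' W' v i t th s) 0 (sqrt 2)
            = RInt (fun s => Derive (fun u => Fk k W v i u th s) t) 0 (sqrt 2)).
  { apply RInt_ext. intros s _. symmetry. apply is_derive_unique. apply (Fk_deriv b a); auto. }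
  rewrite E.
  apply (is_derive_RInt_param (fun t s => Fk k W v i t th s) 0 (sqrt 2) t).
  - apply (filter_imp (fun t => b < t < a)); [|exact Hloc].
    intros x Hx s _. eexists. apply (Fk_deriv b a); auto.
  - intros s _.
    apply (continuity_2d_pt_ext_loc (fun u s => Fk k' W' v i u th s)).
    + destruct (loc2d b a t s Hloc) as [e He]. exists e. intros u s' Hu Hs'.
      symmetry. apply is_derive_unique. apply (Fk_deriv b a); auto. apply (He u s' Hu Hs').
    + apply (cont3_ts (Fk k' W' v i)). apply (Fk_cont3 b a); auto.
  - apply (filter_imp (fun t => b < t < a)); [|exact Hloc].
    intros x Hx. apply (ex_RInt_continuous (V:=R_CompleteNormedModule)). intros z _.
    apply (cont3_s (Fk k W v i)). apply (Fk_cont3 b a); auto.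
Qed.

Lemma Dlem b a k k' W v i :
  (forall x, b < x < a -> is_derive k x (k' x)) -> (forall x, b < x < a -> continuous k' x) ->
  Wok W -> in_box b a v ->
  is_derive (fun t => Iint k W (upd v i t)) (coord v i) (Iint k' (fun th s => W th s * wc i th s) v).
Proof.
  intros Hk Hk' HW Hv.
  set (W' := fun th s => W th s * wc i th s).
  assert (HW' : Wok W') by (apply Wok_mul; exact HW).
  assert (Hc0 := coord_box b a v i Hv).
  set (c0 := coord v i) in *.
  assert (Hloc := loc_int b a c0 Hc0).
  apply (is_derive_ext (fun t => RInt (fun th => RInt (fun s => Fk k W v i t th s) 0 (sqrt 2)) (-(PI/2)) (PI/2))).
  { intro t. unfold Iint, Fk. apply RInt_ext. intros th _. apply RInt_ext. intros s _.
    rewrite Lf_upd. reflexivity. }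
  assert (E : Iint k' W' v = RInt (fun th => Derive (fun u => RInt (fun s => Fk k W v i u th s) 0 (sqrt 2)) c0) (-(PI/2)) (PI/2)).
  { unfold Iint. apply RInt_ext. intros th _. symmetry. apply is_derive_unique.
    assert (H1 := inner_deriv b a k k' W v i c0 th Hk Hk' HW Hv Hc0).
    replace (RInt (fun s => k' (Lf v th s) * W' th s) 0 (sqrt 2)) with
      (RInt (fun s => Fk k' (fun th s => W th s * wc i th s) v i c0 th s) 0 (sqrt 2)).
    exact H1.
    apply RInt_ext. intros s _. unfold Fk. unfold c0. rewrite Rminus_diag, Rmult_0_l, Rplus_0_r.
    reflexivity. }
  fold W'. rewrite E.
  assert (Hg : forall u th, b < u < a -> continuity_2d_pt (fun u th => RInt (fun s => Fk k' W' v i u th s) 0 (sqrt 2)) u th).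
  { intros u th Hu. apply param_cont.
    - apply sqrt_pos.
    - intros s _. apply (Fk_cont3 b a); auto.
    - destruct (loc2d b a u th (loc_int b a u Hu)) as [e He]. exists e. intros x y Hx Hy.
      apply (ex_RInt_continuous (V:=R_CompleteNormedModule)). intros z _.
      apply (cont3_s (Fk k' W' v i)). apply (Fk_cont3 b a); auto. apply (He x y Hx Hy). }
  assert (Hf : forall u th, b < u < a -> continuity_2d_pt (fun u th => RInt (fun s => Fk k W v i u th s) 0 (sqrt 2)) u th).
  { intros u th Hu. apply param_cont.
    - apply sqrt_pos.
    - intros s _. apply (Fk_cont3 b a); auto.
      intros x Hx. apply (ex_derive_continuous (K:=R_AbsRing) (V:=R_NormedModule)).
      eexists. apply Hk. exact Hx.
    - destruct (loc2d b a u th (loc_int b a u Hu)) as [e He]. exists e. intros x y Hx Hy.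
      apply (ex_RInt_continuous (V:=R_CompleteNormedModule)). intros z _.
      apply (cont3_s (Fk k W v i)). apply (Fk_cont3 b a); auto.
      intros x' Hx'. apply (ex_derive_continuous (K:=R_AbsRing) (V:=R_NormedModule)).
      eexists. apply Hk. exact Hx'. apply (He x y Hx Hy). }
  apply (is_derive_RInt_param (fun t th => RInt (fun s => Fk k W v i t th s) 0 (sqrt 2)) (-(PI/2)) (PI/2) c0).
  - apply (filter_imp (fun t => b < t < a)); [|exact Hloc].
    intros x Hx th _. eexists. apply (inner_deriv b a k k' W v i x th); auto.
  - intros th _.
    apply (continuity_2d_pt_ext_loc (fun u th => RInt (fun s => Fk k' W' v i u th s) 0 (sqrt 2))).
    + destruct (loc2d b a c0 th Hloc) as [e He]. exists e. intros u th' Hu Hth.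
      symmetry. apply is_derive_unique. apply (inner_deriv b a k k' W v i u th'); auto.
      apply (He u th' Hu Hth).
    + apply Hg. exact Hc0.
  - apply (filter_imp (fun t => b < t < a)); [|exact Hloc].
    intros x Hx. apply (ex_RInt_continuous (V:=R_CompleteNormedModule)). intros z _.
    apply (cont2d_1d (fun u th => RInt (fun s => Fk k W v i u th s) 0 (sqrt 2))). apply Hf. exact Hx.
Qed.


Lemma cont_bound (K : R -> R) c d : c <= d -> (forall x, c <= x <= d -> continuous K x) ->
  exists M, 0 <= M /\ forall x, c <= x <= d -> Rabs (K x) <= M.
Proof.
  intros Hcd Hc. destruct (continuity_ab_maj (fun x => Rabs (K x)) c d Hcd) as [Mx [HM HMx]].
  - intros x Hx. apply (proj2 (continuity_pt_filterlim _ _)).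
    apply (continuous_Rabs_comp K). apply Hc; auto.
  - exists (Rabs (K Mx)). split. apply Rabs_pos. exact HM.
Qed.

Lemma RInt_end (K : R -> R) c d p q M : c <= p -> p <= q -> q <= d ->
  (forall x, c <= x <= d -> continuous K x) -> (forall x, c <= x <= d -> Rabs (K x) <= M) ->
  Rabs (RInt K p q - RInt K c d) <= M * ((p - c) + (d - q)).
Proof.
  intros H1 H2 H3 Hc HM.
  assert (ex : ex_RInt K c d).
  { apply (ex_RInt_continuous (V:=R_CompleteNormedModule)).
    rewrite Rmin_left, Rmax_right by lra. intros z Hz. apply Hc. exact Hz. }
  assert (ex1 : ex_RInt K c p) by (apply (ex_RInt_Chasles_1 K c p d); [lra|exact ex]).
  assert (expd : ex_RInt K p d) by (apply (ex_RInt_Chasles_2 K c p d); [lra|exact ex]).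
  assert (ex2 : ex_RInt K p q) by (apply (ex_RInt_Chasles_1 K p q d); [lra|exact expd]).
  assert (ex3 : ex_RInt K q d) by (apply (ex_RInt_Chasles_2 K p q d); [lra|exact expd]).
  assert (E1 : RInt K c p + RInt K p d = RInt K c d) by exact (RInt_Chasles K c p d ex1 expd).
  assert (E2 : RInt K p q + RInt K q d = RInt K p d) by exact (RInt_Chasles K p q d ex2 ex3).
  assert (B1 : Rabs (RInt K c p) <= (p - c) * M).
  { apply abs_RInt_le_const; auto. intros t Ht. apply HM. lra. }
  assert (B2 : Rabs (RInt K q d) <= (d - q) * M).
  { apply abs_RInt_le_const; auto. intros t Ht. apply HM. lra. }
  replace (RInt K p q - RInt K c d) with (- RInt K c p + - RInt K q d) by lra.
  eapply Rle_trans; [apply Rabs_triang|]. rewrite !Rabs_Ropp. lra.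
Qed.


Lemma sq_cont : forall y, continuous (fun s : R => 1 - s ^ 2) y.
Proof. intro y. apply (ex_derive_continuous (K:=R_AbsRing) (V:=R_NormedModule)). auto_derive. auto. Qed.

Lemma Q1 (g : R -> R) : (forall mu, -1 <= mu <= 1 -> continuous g mu) ->
  is_RInt_gen (fun mu => g mu / sqrt (1 - mu)) (at_right (-1)) (at_left 1)
              (RInt (fun s => 2 * g (1 - s^2)) 0 (sqrt 2)).
Proof.
  intros Hg.
  set (K := fun s => 2 * g (1 - s^2)).
  set (h := fun mu => g mu / sqrt (1 - mu)).
  assert (S2 : sqrt 2 ^ 2 = 2) by (rewrite pow2_sqrt; lra).
  assert (S2p : 0 < sqrt 2) by (apply sqrt_lt_R0; lra).
  assert (HK : forall s, 0 <= s <= sqrt 2 -> continuous K s).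
  { intros s Hs. unfold K. apply (cR_mult (fun _ => 2) (fun s => g (1 - s^2))). apply cR_const.
    apply (cR_comp (fun s => 1 - s^2) g). apply sq_cont.
    apply Hg. split; nra. }
  assert (Hh : forall mu, -1 < mu < 1 -> continuous h mu).
  { intros mu Hmu. unfold h. apply (cR_mult g (fun mu => / sqrt (1 - mu))). apply Hg; lra.
    apply continuous_Rinv_comp. apply continuous_sqrt_comp.
    apply (cR_minus (fun _ => 1) (fun x => x)). apply cR_const. apply continuous_id.
    apply Rgt_not_eq. apply sqrt_lt_R0. lra. }
  assert (Hform : forall x y, -1 < x -> x < y -> y < 1 ->
                    is_RInt h x y (RInt K (sqrt (1 - y)) (sqrt (1 - x)))).
  { intros x y Hx Hxy Hy.
    set (a' := sqrt (1 - x)). set (b' := sqrt (1 - y)).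
    assert (Ea : a' ^ 2 = 1 - x) by (unfold a'; rewrite pow2_sqrt; lra).
    assert (Eb : b' ^ 2 = 1 - y) by (unfold b'; rewrite pow2_sqrt; lra).
    assert (Hb0 : 0 < b') by (apply sqrt_lt_R0; lra).
    assert (Hba : b' <= a') by (apply sqrt_le_1_alt; lra).
    assert (ex : ex_RInt h x y).
    { apply (ex_RInt_continuous (V:=R_CompleteNormedModule)).
      rewrite Rmin_left, Rmax_right by lra. intros z Hz. apply Hh. lra. }
    assert (HRC := RInt_comp h (fun s => 1 - s^2) (fun s => -(2*s)) b' a').
    rewrite Rmin_left, Rmax_right in HRC by lra.
    assert (exK : ex_RInt K b' a').
    { apply (ex_RInt_continuous (V:=R_CompleteNormedModule)).
      rewrite Rmin_left, Rmax_right by lra. intros z Hz. apply HK.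
      split; [lra|]. apply Rle_trans with a'; [lra|]. unfold a'. apply sqrt_le_1_alt. lra. }
    assert (E1 : RInt (fun s => scal (-(2*s)) (h (1 - s^2))) b' a' = RInt (fun s => opp (K s)) b' a').
    { apply RInt_ext. rewrite Rmin_left, Rmax_right by lra. intros s Hs.
      unfold h, K. replace (1 - (1 - s^2)) with (s^2) by ring. rewrite sqrt_pow2 by lra.
      unfold scal; simpl; unfold mult, opp; simpl. field. lra. }
    assert (HRC' : RInt (fun s => scal (-(2*s)) (h (1 - s^2))) b' a' = RInt h (1 - b'^2) (1 - a'^2)).
    { apply HRC.
      - intros s Hs. apply Hh. split; nra.
      - intros s Hs. split. auto_derive. auto. ring.
        apply (ex_derive_continuous (K:=R_AbsRing) (V:=R_NormedModule)). auto_derive. auto. }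
    rewrite HRC' in E1.
    rewrite Ea, Eb in E1. replace (1 - (1 - y)) with y in E1 by ring.
    replace (1 - (1 - x)) with x in E1 by ring.
    assert (E1' : RInt h y x = - RInt K b' a').
    { rewrite E1. exact (RInt_opp K b' a' exK). }
    assert (E2 : RInt h x y = RInt K b' a').
    { assert (E4 : opp (RInt h y x) = RInt h x y) by exact (opp_RInt_swap h y x (ex_RInt_swap h x y ex)).
      rewrite <- E4, E1'. unfold opp; simpl. ring. }
    rewrite <- E2. exact (RInt_correct (V:=R_CompleteNormedModule) h x y ex). }
  destruct (cont_bound K 0 (sqrt 2)) as [M [HM0 HM]]; [lra|exact HK|].
  intros P [eps HP].
  set (e := eps / (2 * (M + 1))).
  assert (He : 0 < e) by (unfold e; apply Rdiv_lt_0_compat; [apply cond_pos|lra]).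
  destruct (proj1 (filterlim_locally _ _) (continuous_sqrt 0) (mkposreal e He)) as [d0 Hd0].
  destruct (proj1 (filterlim_locally _ _) (continuous_sqrt 2) (mkposreal e He)) as [d2 Hd2].
  assert (Hd0p : 0 < Rmin d0 1) by (apply Rmin_pos; [apply cond_pos|lra]).
  assert (Hd2p : 0 < Rmin d2 1) by (apply Rmin_pos; [apply cond_pos|lra]).
  apply (Filter_prod _ _ _ (fun x => -1 < x < -1 + Rmin d2 1) (fun y => 1 - Rmin d0 1 < y < 1)).
  - exists (mkposreal _ Hd2p). intros x Hx Hx1. change (Rabs (x - -1) < Rmin d2 1) in Hx.
    apply Rabs_lt_between in Hx. lra.
  - exists (mkposreal _ Hd0p). intros x Hx Hx1. change (Rabs (x - 1) < Rmin d0 1) in Hx.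
    apply Rabs_lt_between in Hx. lra.
  - intros x y Hx Hy. simpl.
    assert (Hm1 := Rmin_r d2 1). assert (Hm2 := Rmin_r d0 1).
    assert (Hm3 := Rmin_l d2 1). assert (Hm4 := Rmin_l d0 1).
    exists (RInt K (sqrt (1 - y)) (sqrt (1 - x))). split.
    + apply Hform; lra.
    + apply HP. apply ballR.
      assert (B0 : Rabs (sqrt (1 - y) - sqrt 0) < e).
      { apply (Hd0 (1 - y)). apply ballR. rewrite Rminus_0_r, Rabs_pos_eq; lra. }
      assert (B2 : Rabs (sqrt (1 - x) - sqrt 2) < e).
      { apply (Hd2 (1 - x)). apply ballR. rewrite Rabs_left1; lra. }
      rewrite sqrt_0, Rminus_0_r in B0.
      assert (Hb0 : 0 <= sqrt (1 - y)) by apply sqrt_pos.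
      assert (Hba : sqrt (1 - y) <= sqrt (1 - x)) by (apply sqrt_le_1_alt; lra).
      assert (Ha2 : sqrt (1 - x) <= sqrt 2) by (apply sqrt_le_1_alt; lra).
      rewrite Rabs_pos_eq in B0 by lra. rewrite Rabs_left1 in B2 by lra.
      eapply Rle_lt_trans.
      { apply (RInt_end K 0 (sqrt 2)); auto. }
      apply Rle_lt_trans with (M * (2 * e)).
      { apply Rmult_le_compat_l; lra. }
      unfold e. apply Rminus_gt_0_lt.
      replace (eps - M * (2 * (eps / (2 * (M + 1))))) with (eps / (M + 1)) by (field; lra).
      apply Rdiv_lt_0_compat; [apply cond_pos|lra].
Qed.


Lemma sin_le_mono p q : -(PI/2) <= p -> p <= q -> q <= PI/2 -> sin p <= sin q.
Proof.
  intros H1 H2 H3. destruct (Req_dec p q) as [->|Hne]; [lra|].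
  left. apply sin_increasing_1; lra.
Qed.

Lemma Q2 (Phi : R -> R) : (forall th, continuous (fun th => Phi (sin th)) th) ->
  (forall tau, -1 < tau < 1 -> continuous Phi tau) ->
  is_RInt_gen (fun tau => Phi tau / sqrt (1 - tau^2)) (at_right (-1)) (at_left 1)
              (RInt (fun th => Phi (sin th)) (-(PI/2)) (PI/2)).
Proof.
  intros HK0 HPhi.
  set (K := fun th => Phi (sin th)).
  set (h := fun tau => Phi tau / sqrt (1 - tau^2)).
  assert (PI0 := PI_RGT_0).
  assert (HK : forall th, continuous K th) by exact HK0.
  assert (Hh : forall tau, -1 < tau < 1 -> continuous h tau).
  { intros tau Ht. unfold h. apply (cR_mult Phi (fun tau => / sqrt (1 - tau^2))). apply HPhi; lra.
    apply continuous_Rinv_comp. apply continuous_sqrt_comp.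
    apply (ex_derive_continuous (K:=R_AbsRing) (V:=R_NormedModule)). auto_derive. auto.
    apply Rgt_not_eq. apply sqrt_lt_R0. nra. }
  assert (Hsinb : forall th, -(PI/2) < th < PI/2 -> -1 < sin th < 1).
  { intros th Hth. assert (E1 : sin (-(PI/2)) = -1) by (rewrite sin_neg, sin_PI2; ring).
    assert (sin (-(PI/2)) < sin th) by (apply sin_increasing_1; lra).
    assert (sin th < sin (PI/2)) by (apply sin_increasing_1; lra).
    rewrite sin_PI2 in *. lra. }
  assert (Hform : forall x y, -1 < x -> x < y -> y < 1 ->
                    is_RInt h x y (RInt K (asin x) (asin y))).
  { intros x y Hx Hxy Hy.
    assert (Hax := asin_bound_lt x (conj Hx (Rlt_trans _ _ _ Hxy Hy))).
    assert (Hay := asin_bound_lt y (conj (Rlt_trans _ _ _ Hx Hxy) Hy)).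
    assert (Hxy' : asin x < asin y).
    { apply sin_increasing_0; try lra. rewrite !sin_asin by lra. exact Hxy. }
    assert (ex : ex_RInt h x y).
    { apply (ex_RInt_continuous (V:=R_CompleteNormedModule)).
      rewrite Rmin_left, Rmax_right by lra. intros z Hz. apply Hh. lra. }
    assert (HRC := RInt_comp h sin cos (asin x) (asin y)).
    rewrite Rmin_left, Rmax_right in HRC by lra.
    assert (HRC' : RInt (fun s => scal (cos s) (h (sin s))) (asin x) (asin y) = RInt h (sin (asin x)) (sin (asin y))).
    { apply HRC.
      - intros s Hs. apply Hh. apply Hsinb. lra.
      - intros s Hs. split. apply is_derive_sin. apply continuous_cos. }
    rewrite !sin_asin in HRC' by lra.
    assert (E1 : RInt (fun s => scal (cos s) (h (sin s))) (asin x) (asin y) = RInt K (asin x) (asin y)).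
    { apply RInt_ext. rewrite Rmin_left, Rmax_right by lra. intros s Hs.
      assert (Hc : 0 < cos s) by (apply cos_gt_0; lra).
      unfold h, K. replace (1 - sin s ^ 2) with (cos s ^ 2).
      rewrite sqrt_pow2 by lra. unfold scal; simpl; unfold mult; simpl. field. lra.
      assert (H2 := sin2_cos2 s). unfold Rsqr in H2. nra. }
    rewrite HRC' in E1. rewrite <- E1.
    exact (RInt_correct (V:=R_CompleteNormedModule) h x y ex). }
  destruct (cont_bound K (-(PI/2)) (PI/2)) as [M [HM0 HM]]; [lra|intros; apply HK|].
  intros P [eps HP].
  set (e := Rmin (eps / (2 * (M + 1))) (PI/2)).
  assert (He : 0 < e) by (unfold e; apply Rmin_pos; [apply Rdiv_lt_0_compat; [apply cond_pos|lra]|lra]).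
  assert (He1 := Rmin_l (eps / (2 * (M + 1))) (PI/2)).
  assert (He2 := Rmin_r (eps / (2 * (M + 1))) (PI/2)).
  fold e in He1, He2.
  set (sa := sin (-(PI/2) + e)). set (sb := sin (PI/2 - e)).
  assert (Hsa : -1 < sa < 1) by (apply Hsinb; lra).
  assert (Hsb : -1 < sb < 1) by (apply Hsinb; lra).
  assert (Hda : 0 < sa + 1) by lra.
  assert (Hdb : 0 < 1 - sb) by lra.
  apply (Filter_prod _ _ _ (fun x => -1 < x < sa) (fun y => sb < y < 1)).
  - exists (mkposreal _ Hda). intros x Hx Hx1. change (Rabs (x - -1) < sa + 1) in Hx.
    apply Rabs_lt_between in Hx. lra.
  - exists (mkposreal _ Hdb). intros x Hx Hx1. change (Rabs (x - 1) < 1 - sb) in Hx.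
    apply Rabs_lt_between in Hx. lra.
  - intros x y Hx Hy. simpl.
    assert (Hxy : x < y).
    { apply Rlt_trans with sa. lra. apply Rle_lt_trans with sb; [|lra].
      unfold sa, sb. apply sin_le_mono; lra. }
    exists (RInt K (asin x) (asin y)). split.
    + apply Hform; lra.
    + apply HP. apply ballR.
      assert (Hax := asin_bound x). assert (Hay := asin_bound y).
      assert (A1 : asin x < -(PI/2) + e).
      { destruct (Rlt_le_dec (asin x) (-(PI/2) + e)) as [ok|bad]; [exact ok|exfalso].
        assert (sin (-(PI/2) + e) <= sin (asin x)) by (apply sin_le_mono; lra).
        rewrite sin_asin in H by lra. fold sa in H. lra. }
      assert (A2 : PI/2 - e < asin y).
      { destruct (Rlt_le_dec (PI/2 - e) (asin y)) as [ok|bad]; [exact ok|exfalso].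
        assert (sin (asin y) <= sin (PI/2 - e)) by (apply sin_le_mono; lra).
        rewrite sin_asin in H by lra. fold sb in H. lra. }
      assert (Hxy' : asin x <= asin y).
      { left. apply sin_increasing_0; try lra. rewrite !sin_asin by lra. exact Hxy. }
      eapply Rle_lt_trans.
      { apply (RInt_end K (-(PI/2)) (PI/2)); try lra. intros; apply HK. exact HM. }
      apply Rle_lt_trans with (M * (2 * (eps / (2 * (M + 1))))).
      { apply Rmult_le_compat_l; lra. }
      apply Rminus_gt_0_lt.
      replace (eps - M * (2 * (eps / (2 * (M + 1))))) with (eps / (M + 1)) by (field; lra).
      apply Rdiv_lt_0_compat; [apply cond_pos|lra].
Qed.


Definition Pf (v : R*R*R) (mu tau : R) : R :=
  (1 + mu) / 2 * ((1 + tau) / 2) * coord v 0 + (1 + mu) / 2 * ((1 - tau) / 2) * coord v 1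
  + (1 - mu) / 2 * coord v 2.

Lemma conv3 b a x y z w0 w1 w2 : b < x < a -> b < y < a -> b < z < a ->
  0 <= w0 -> 0 <= w1 -> 0 <= w2 -> w0 + w1 + w2 = 1 ->
  b < x * w0 + y * w1 + z * w2 < a.
Proof.
  intros [H1 H2] [H3 H4] [H5 H6] W0 W1 W2 S.
  set (m := Rmin (x - b) (Rmin (y - b) (z - b))).
  set (M := Rmin (a - x) (Rmin (a - y) (a - z))).
  assert (m <= x - b /\ m <= y - b /\ m <= z - b /\ 0 < m) as [m1 [m2 [m3 m4]]].
  { unfold m. repeat split; try apply Rmin_l;
    try (eapply Rle_trans; [apply Rmin_r|]); try apply Rmin_l; try apply Rmin_r;
    repeat apply Rmin_pos; lra. }
  assert (M <= a - x /\ M <= a - y /\ M <= a - z /\ 0 < M) as [M1 [M2 [M3 M4]]].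
  { unfold M. repeat split; try apply Rmin_l;
    try (eapply Rle_trans; [apply Rmin_r|]); try apply Rmin_l; try apply Rmin_r;
    repeat apply Rmin_pos; lra. }
  assert ((x - b) * w0 >= m * w0) by nra.
  assert ((y - b) * w1 >= m * w1) by nra.
  assert ((z - b) * w2 >= m * w2) by nra.
  assert ((a - x) * w0 >= M * w0) by nra.
  assert ((a - y) * w1 >= M * w1) by nra.
  assert ((a - z) * w2 >= M * w2) by nra.
  split; nra.
Qed.

Lemma P_box b a v mu tau : in_box b a v -> -1 <= mu <= 1 -> -1 <= tau <= 1 ->
  b < Pf v mu tau < a.
Proof.
  intros [Hx [Hy Hz]] Hm Ht.
  replace (Pf v mu tau) with (coord v 0 * ((1 + mu) / 2 * ((1 + tau) / 2))
     + coord v 1 * ((1 + mu) / 2 * ((1 - tau) / 2)) + coord v 2 * ((1 - mu) / 2))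
    by (unfold Pf; ring).
  apply conv3; auto; try (apply Rmult_le_pos); lra.
Qed.

Lemma P_sub v th s : 0 <= s <= sqrt 2 -> Pf v (1 - s^2) (sin th) = Lf v th s.
Proof. intros Hs. unfold Pf, Lf, wc. rewrite alpha_eq by exact Hs. field. Qed.

Lemma cR_pow2 {U : UniformSpace} (f : U -> R) x : continuous f x -> continuous (fun y => f y ^ 2) x.
Proof.
  intros H. apply (cR_comp f (fun s => s ^ 2)). exact H.
  apply (ex_derive_continuous (K:=R_AbsRing) (V:=R_NormedModule)). auto_derive. auto.
Qed.
Lemma cR_sin {U : UniformSpace} (f : U -> R) x : continuous f x -> continuous (fun y => sin (f y)) x.
Proof. intros H. apply (cR_comp f sin). exact H. apply continuous_sin. Qed.

Ltac cont := repeat match goal with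
 | |- continuous (fun _ => _ - _) _ => apply cR_minus
 | |- continuous (fun _ => _ + _) _ => apply cR_plus
 | |- continuous (fun _ => _ * _) _ => apply cR_mult
 | |- continuous (fun _ => _ ^ 2) _ => apply cR_pow2
 | |- continuous (fun _ => sin _) _ => apply cR_sin
 | |- continuous fst _ => apply c2_1
 | |- continuous snd _ => apply c2_2
 | |- continuous (fun y => fst y) _ => apply c2_1
 | |- continuous (fun y => snd y) _ => apply c2_2
 | |- continuous (fun y => y) _ => apply continuous_id
 | |- continuous (Rplus ?c) _ => apply (cR_plus (fun _ => c) (fun y => y)); [apply cR_const|apply continuous_id]
 | |- continuous (Rminus ?c) _ => apply (cR_minus (fun _ => c) (fun y => y)); [apply cR_const|apply continuous_id]
 | |- continuous (fun _ => _) _ => apply cR_const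
 end.

Lemma Wok_P v : Wok (fun tau s => Pf v (1 - s^2) tau).
Proof. intro p. cbv beta. unfold Pf, Rdiv. cont. Qed.
Lemma Wok_Ps v : Wok (fun th s => Pf v (1 - s^2) (sin th)).
Proof. intro p. cbv beta. unfold Pf, Rdiv. cont. Qed.

Lemma GP_cont3 b a (f : R -> R) (Wp : R -> R -> R) x y s : (forall x, b < x < a -> continuous f x) ->
  Wok Wp -> b < Wp y s < a ->
  continuous (fun p : R*R*R => (fun (_ : R) y s => 2 * f (Wp y s)) (fst (fst p)) (snd (fst p)) (snd p)) ((x,y),s).
Proof.
  intros Hf HW Hb. cbv beta.
  apply (cR_mult (fun _ => 2) (fun p : R*R*R => f (Wp (snd (fst p)) (snd p)))). apply cR_const.
  apply (cR_comp (fun p : R*R*R => Wp (snd (fst p)) (snd p)) f). apply (c3_W Wp). exact HW.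
  apply Hf. exact Hb.
Qed.

Lemma s_range s : 0 <= s <= sqrt 2 -> -1 <= 1 - s^2 <= 1.
Proof. intros Hs. assert (E : sqrt 2 ^ 2 = 2) by (rewrite pow2_sqrt; lra). split; nra. Qed.

Lemma q_eq b a f v : (forall x, b < x < a -> continuous f x) -> in_box b a v ->
  q f v = / (2 * sqrt 2 * PI) * Iint f (fun _ _ => 2) v.
Proof.
  intros Hf Hv. unfold q. f_equal.
  change (RInt_gen (fun tau => RInt_gen (fun mu => f (Pf v mu tau) / sqrt ((1 - mu) * (1 - tau^2)))
      (at_right (-1)) (at_left 1)) (at_right (-1)) (at_left 1) = Iint f (fun _ _ => 2) v).
  set (Phi := fun tau => RInt (fun s => 2 * f (Pf v (1 - s^2) tau)) 0 (sqrt 2)).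
  assert (PI0 := PI_RGT_0).
  assert (Hexs : forall tau, -1 <= tau <= 1 -> ex_RInt (fun s => 2 * f (Pf v (1 - s^2) tau)) 0 (sqrt 2)).
  { intros tau Ht. apply (ex_RInt_continuous (V:=R_CompleteNormedModule)).
    rewrite Rmin_left, Rmax_right by apply sqrt_pos. intros z Hz.
    apply (cont3_s (fun (_ : R) y s => 2 * f (Pf v (1 - s^2) y)) 0 tau z).
    apply (GP_cont3 b a f (fun tau s => Pf v (1 - s^2) tau)); auto. apply Wok_P.
    apply P_box; auto. apply s_range; auto. }
  assert (Hin : forall tau, -1 < tau < 1 ->
    is_RInt_gen (fun mu => f (Pf v mu tau) / sqrt ((1 - mu) * (1 - tau^2))) (at_right (-1)) (at_left 1)
      (Phi tau / sqrt (1 - tau^2))).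
  { intros tau Ht.
    assert (Hc : 0 < sqrt (1 - tau^2)) by (apply sqrt_lt_R0; nra).
    replace (Phi tau / sqrt (1 - tau^2)) with
      (RInt (fun s => 2 * (fun mu => f (Pf v mu tau) / sqrt (1 - tau^2)) (1 - s^2)) 0 (sqrt 2)).
    - apply (is_RInt_gen_ext (fun mu => (fun mu => f (Pf v mu tau) / sqrt (1 - tau^2)) mu / sqrt (1 - mu))).
      + apply (Filter_prod _ _ _ (fun x => -1 < x < 1) (fun y => -1 < y < 1)).
        * exists (mkposreal 2 ltac:(lra)). intros x Hx Hx1. change (Rabs (x - -1) < 2) in Hx.
          apply Rabs_lt_between in Hx. lra.
        * exists (mkposreal 2 ltac:(lra)). intros x Hx Hx1. change (Rabs (x - 1) < 2) in Hx.
          apply Rabs_lt_between in Hx. lra.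
        * intros x y Hx Hy mu Hmu. simpl in Hmu.
          assert (-1 < mu < 1).
          { destruct Hmu as [Hm1 Hm2]. split.
            - eapply Rle_lt_trans; [|exact Hm1]. apply Rmin_glb; lra.
            - eapply Rlt_le_trans; [exact Hm2|]. apply Rmax_lub; lra. }
          rewrite sqrt_mult by nra.
          assert (0 < sqrt (1 - mu)) by (apply sqrt_lt_R0; lra).
          assert (E : forall A c d : R, 0 < c -> 0 < d -> A / c / d = A / (d * c)) by (intros; field; lra).
          apply E; lra.
      + apply Q1. intros mu Hmu.
        apply (cR_mult (fun mu => f (Pf v mu tau)) (fun _ => / sqrt (1 - tau^2))); [|apply cR_const].
        apply (cR_comp (fun mu => Pf v mu tau) f).
        * unfold Pf, Rdiv. cont.
        * apply Hf. apply P_box; auto; lra.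
    - unfold Phi. cbv beta.
      rewrite (RInt_ext _ (fun s => scal (/ sqrt (1 - tau^2)) (2 * f (Pf v (1 - s^2) tau)))).
      + rewrite (RInt_scal (V:=R_CompleteNormedModule)). unfold scal; simpl; unfold mult; simpl.
        unfold Rdiv. ring. apply Hexs. lra.
      + intros s _. unfold scal; simpl; unfold mult; simpl. unfold Rdiv. ring. }
  assert (Hout : is_RInt_gen (fun tau => RInt_gen (fun mu => f (Pf v mu tau) / sqrt ((1 - mu) * (1 - tau^2)))
      (at_right (-1)) (at_left 1)) (at_right (-1)) (at_left 1) (RInt (fun th => Phi (sin th)) (-(PI/2)) (PI/2))).
  { apply (is_RInt_gen_ext (fun tau => Phi tau / sqrt (1 - tau^2))).
    - apply (Filter_prod _ _ _ (fun x => -1 < x < 1) (fun y => -1 < y < 1)).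
      * exists (mkposreal 2 ltac:(lra)). intros x Hx Hx1. change (Rabs (x - -1) < 2) in Hx.
        apply Rabs_lt_between in Hx. lra.
      * exists (mkposreal 2 ltac:(lra)). intros x Hx Hx1. change (Rabs (x - 1) < 2) in Hx.
        apply Rabs_lt_between in Hx. lra.
      * intros x y Hx Hy tau Htau. simpl in Htau.
        assert (-1 < tau < 1).
        { destruct Htau as [Hm1 Hm2]. split.
          - eapply Rle_lt_trans; [|exact Hm1]. apply Rmin_glb; lra.
          - eapply Rlt_le_trans; [exact Hm2|]. apply Rmax_lub; lra. }
        symmetry. apply is_RInt_gen_unique. apply Hin. exact H.
    - apply Q2.
      + intros th. apply (cont2d_1d (fun (_ : R) th => RInt (fun s => 2 * f (Pf v (1 - s^2) (sin th))) 0 (sqrt 2)) 0 th).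
        apply (param_cont (fun (_ : R) th s => 2 * f (Pf v (1 - s^2) (sin th)))).
        * apply sqrt_pos.
        * intros s Hs. apply (GP_cont3 b a f (fun th s => Pf v (1 - s^2) (sin th))); auto.
          apply Wok_Ps. apply P_box; auto. apply s_range; auto. apply sin_bnd.
        * exists (mkposreal 1 Rlt_0_1). intros x y _ _. apply Hexs. apply sin_bnd.
      + intros tau Ht. apply (cont2d_1d (fun (_ : R) tau => Phi tau) 0 tau).
        apply (param_cont (fun (_ : R) tau s => 2 * f (Pf v (1 - s^2) tau))).
        * apply sqrt_pos.
        * intros s Hs. apply (GP_cont3 b a f (fun tau s => Pf v (1 - s^2) tau)); auto.
          apply Wok_P. apply P_box; auto. apply s_range; auto. lra.
        * assert (Hd : 0 < Rmin (tau + 1) (1 - tau)) by (apply Rmin_pos; lra).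
          exists (mkposreal _ Hd). intros x y _ Hy. simpl in Hy. apply Rabs_lt_between in Hy.
          assert (Hm1 := Rmin_l (tau + 1) (1 - tau)). assert (Hm2 := Rmin_r (tau + 1) (1 - tau)).
          apply Hexs. lra. }
  rewrite (is_RInt_gen_unique _ _ Hout).
  unfold Iint. apply RInt_ext. intros th _. unfold Phi. apply RInt_ext.
  rewrite Rmin_left, Rmax_right by apply sqrt_pos. intros s Hs.
  rewrite P_sub by lra. apply Rmult_comm.
Qed.


Lemma sqrt2_pos : 0 < sqrt 2.
Proof. apply sqrt_lt_R0. lra. Qed.

Lemma wc_pos i th s : -(PI/2) < th < PI/2 -> 0 < s < sqrt 2 -> 0 < wc i th s.
Proof.
  intros [Ht1 Ht2] [Hs1 Hs2].
  assert (Ha : alpha s = s^2/2) by (apply alpha_eq; lra).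
  assert (E : sqrt 2 ^ 2 = 2) by (rewrite pow2_sqrt; lra).
  assert (0 < s^2 < 2) by (split; nra).
  assert (Hs3 : sin (-(PI/2)) < sin th) by (apply sin_increasing_1; lra).
  assert (Hs4 : sin th < sin (PI/2)) by (apply sin_increasing_1; lra).
  rewrite sin_neg, sin_PI2 in *.
  destruct i as [|[|i]]; simpl; rewrite Ha; try nra; apply Rmult_lt_0_compat; lra.
Qed.

Lemma Iint_neg b a k W v :
  (forall x, b < x < a -> k x < 0) -> (forall x, b < x < a -> continuous k x) -> Wok W ->
  (forall th s, -(PI/2) < th < PI/2 -> 0 < s < sqrt 2 -> 0 < W th s) ->
  in_box b a v -> Iint k W v < 0.
Proof.
  intros Hk Hc HW Hpos Hv. unfold Iint.
  set (G := fun (_ : R) th s => k (Lf v th s) * W th s).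
  assert (H3 : forall x th s, continuous (fun p : R*R*R => G (fst (fst p)) (snd (fst p)) (snd p)) ((x,th),s)).
  { intros x th s. unfold G. apply cR_mult; [|apply (c3_W W ((x,th),s) HW)].
    apply (cR_comp (fun p : R*R*R => Lf v (snd (fst p)) (snd p)) k).
    - apply (c3_W (Lf v)). intro p. unfold Lf.
      apply cR_plus; [apply cR_plus|]; apply cR_mult; try apply cR_const; apply wc_cont.
    - apply Hc. apply Lf_box. exact Hv. }
  assert (Hcs : forall th s, continuous (fun s => k (Lf v th s) * W th s) s).
  { intros th s. apply (cont3_s G 0 th s). apply H3. }
  assert (Hct : forall th, continuous (fun th => RInt (fun s => k (Lf v th s) * W th s) 0 (sqrt 2)) th).
  { intros th. apply (cont2d_1d (fun x th => RInt (G x th) 0 (sqrt 2)) 0 th).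
    apply param_cont. apply sqrt_pos. intros s _. apply H3.
    exists (mkposreal 1 Rlt_0_1). intros x y _ _.
    apply (ex_RInt_continuous (V:=R_CompleteNormedModule)). intros z _. apply Hcs. }
  assert (PI0 := PI_RGT_0).
  apply Rlt_le_trans with (RInt (fun _ => 0) (-(PI/2)) (PI/2)).
  - apply RInt_lt. lra. intros; apply continuous_const. intros x _. apply Hct.
    intros th Hth.
    apply Rlt_le_trans with (RInt (fun _ => 0) 0 (sqrt 2)).
    + apply RInt_lt. apply sqrt2_pos. intros; apply continuous_const. intros x _. apply Hcs.
      intros s Hs. assert (0 < W th s) by (apply Hpos; auto).
      assert (k (Lf v th s) < 0) by (apply Hk; apply Lf_box; exact Hv). nra.
    + rewrite RInt_const. unfold scal; simpl; unfold mult; simpl. lra.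
  - rewrite RInt_const. unfold scal; simpl; unfold mult; simpl. lra.
Qed.

Lemma lift b a (G : R*R*R -> R) k k' W C i :
  (forall x, b < x < a -> is_derive k x (k' x)) -> (forall x, b < x < a -> continuous k' x) ->
  Wok W -> (forall v, in_box b a v -> G v = C * Iint k W v) ->
  forall v, in_box b a v -> is_pderiv G i v (C * Iint k' (fun th s => W th s * wc i th s) v).
Proof.
  intros Hk Hk' HW HG v Hv. unfold is_pderiv.
  apply (is_derive_ext_loc (fun t => C * Iint k W (upd v i t))).
  - apply (filter_imp (fun t => b < t < a)); [|apply loc_int; apply coord_box; exact Hv].
    intros t Ht. symmetry. apply HG. apply box_upd; auto.
  - apply is_derive_scal. apply (Dlem b a); auto.
Qed.



Theorem lemma5p3 (nu a b : R) (f : R -> R)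
  (Hab : a + nu > b + nu) (Hb : b + nu > 0)
  (Hsmooth : forall (n : nat) (x : R), b < x < a -> ex_derive_n f n x)
  (Hdecr : forall x y : R, b < x -> x < y -> y < a -> f y < f x)
  (uh : R) (Huh : b < uh < a)
  (Hf0 : f uh = 0) (Hf1 : Derive f uh = 0) (Hf2 : Derive_n f 2 uh = 0)
  (Hf3 : forall x : R, b < x < a -> Derive_n f 3 x < 0) :
  forall (i j k : nat), (i < 3)%nat -> (j < 3)%nat -> (k < 3)%nat ->
  forall u : R * R * R, in_box b a u ->
    ex_pderiv (q f) i u /\
    ex_pderiv (pderiv (q f) i) j u /\
    exists l : R, is_pderiv (pderiv (pderiv (q f) i) j) k u l /\ l < 0.
Proof.
  intros i j k _ _ _ u Hu.
  assert (Hder : forall n x, b < x < a -> is_derive (Derive_n f n) x (Derive_n f (S n) x)).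
  { intros n x Hx. apply Derive_correct. exact (Hsmooth (S n) x Hx). }
  assert (Hcont : forall n x, b < x < a -> continuous (Derive_n f n) x).
  { intros n x Hx. apply (ex_derive_continuous (K:=R_AbsRing) (V:=R_NormedModule)).
    exact (Hsmooth (S n) x Hx). }
  set (C := / (2 * sqrt 2 * PI)).
  set (W0 := fun _ _ : R => 2).
  set (W1 := fun th s => W0 th s * wc i th s).
  set (W2 := fun th s => W1 th s * wc j th s).
  set (W3 := fun th s => W2 th s * wc k th s).
  assert (HW0 : Wok W0) by apply Wok_const.
  assert (HW1 : Wok W1) by (apply Wok_mul; exact HW0).
  assert (HW2 : Wok W2) by (apply Wok_mul; exact HW1).
  assert (S0 : forall v, in_box b a v -> q f v = C * Iint (Derive_n f 0) W0 v).
  { intros v Hv. apply (q_eq b a). exact (Hcont 0%nat). exact Hv. }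
  assert (S1 : forall v, in_box b a v -> is_pderiv (q f) i v (C * Iint (Derive_n f 1) W1 v)).
  { apply (lift b a (q f) (Derive_n f 0) (Derive_n f 1) W0 C i). apply Hder. apply Hcont. exact HW0. exact S0. }
  assert (S1' : forall v, in_box b a v -> pderiv (q f) i v = C * Iint (Derive_n f 1) W1 v).
  { intros v Hv. apply is_derive_unique. apply S1. exact Hv. }
  assert (S2 : forall v, in_box b a v -> is_pderiv (pderiv (q f) i) j v (C * Iint (Derive_n f 2) W2 v)).
  { apply (lift b a _ (Derive_n f 1) (Derive_n f 2) W1 C j). apply Hder. apply Hcont. exact HW1. exact S1'. }
  assert (S2' : forall v, in_box b a v -> pderiv (pderiv (q f) i) j v = C * Iint (Derive_n f 2) W2 v).
  { intros v Hv. apply is_derive_unique. apply S2. exact Hv. }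
  assert (S3 : forall v, in_box b a v -> is_pderiv (pderiv (pderiv (q f) i) j) k v (C * Iint (Derive_n f 3) W3 v)).
  { apply (lift b a _ (Derive_n f 2) (Derive_n f 3) W2 C k). apply Hder. apply Hcont. exact HW2. exact S2'. }
  split; [|split].
  - eexists. apply S1. exact Hu.
  - eexists. apply S2. exact Hu.
  - exists (C * Iint (Derive_n f 3) W3 u). split. apply S3. exact Hu.
    assert (HC : 0 < C).
    { unfold C. apply Rinv_0_lt_compat. assert (PI0 := PI_RGT_0). assert (H2 := sqrt2_pos).
      apply Rmult_lt_0_compat; [apply Rmult_lt_0_compat|]; lra. }
    assert (Iint (Derive_n f 3) W3 u < 0).
    { apply (Iint_neg b a). exact Hf3. apply Hcont. apply Wok_mul; exact HW2.
      intros th s Hth Hs. unfold W3, W2, W1, W0.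
      assert (H1 := wc_pos i th s Hth Hs). assert (H2 := wc_pos j th s Hth Hs).
      assert (H3 := wc_pos k th s Hth Hs).
      repeat apply Rmult_lt_0_compat; lra. exact Hu. }
    nra.
Qed.
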